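(* Let $f:G\to H$ be a morphism in $\mathbf{Gpd}^{\mathbf{G}}$ equipped with the projective model structure. The following are equivalent: (i) $f$ is a (right) homotopy equivalence; (ii) $f$ is a levelwise weak equivalence (its underlying functor is an equivalence of groupoids) and $f$ induces an isomorphism between the full subgroupoids of fixed points $G_{\mathbf{f}}$ and $H_{\mathbf{f}}$; (iii) $f$ is a levelwise weak equivalence and $f$ induces an isomorphism between $G^{\mathbf{G}}$ and $H^{\mathbf{G}}$; (iv) $f$ is a levelwise weak equivalence and $f$ induces a bijection between the set of fixed points of $G$ and the set of fixed points of $H$.
   Context: $\mathbf{Gpd}^{\mathbf{G}}$ is the category of groupoids equipped with an involution and functors commuting with the involutions. Projective model structure: weak equivalences (resp. fibrations) are the morphisms whose underlying functor is an equivalence (resp. isofibration) of groupoids; cofibrations are the morphisms with the left lifting property against trivial fibrations. A path object for $X$ is a factorization of the diagonal $X\to X\times X$ as a trivial cofibration $X\to PX$ followed by a fibration $PX\to X\times X$. Two morphisms $f,g:A\to X$ are right homotopic if there are a path object $PX$ and $H:A\to PX$ whose composite with $PX\to X\times X$ is $\langle f,g\rangle$. A morphism $f:X\to Y$ is a (right) homotopy equivalence if there is $g:Y\to X$ with $f\circ g$ right homotopic to $1_Y$ and $g\circ f$ right homotopic to $1_X$. For a groupoid with involution $\alpha$, fixed points are objects $x$ with $\alpha(x)=x$; $G_{\mathbf{f}}$ is the full subgroupoid on fixed points; $G^{\mathbf{G}}$ is the subgroupoid of fixed points and fixed morphisms. *)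

(* Defs.v *)
From Stdlib Require Import FunctionalExtensionality ProofIrrelevance.

Set Implicit Arguments.
Unset Strict Implicit.

(* pairs with definitional eta (used for the product groupoid) *)
Set Primitive Projections.
Record gpair (A B : Type) : Type := mkgpair { gfst : A; gsnd : B }.
Unset Primitive Projections.
Arguments mkgpair {A B} _ _.
Arguments gfst {A B} _.
Arguments gsnd {A B} _.

Record Gpd : Type := {
  ob :> Type;
  hom : ob -> ob -> Type;
  gid : forall x, hom x x;
  gcomp : forall x y z, hom y z -> hom x y -> hom x z;
  ginv : forall x y, hom x y -> hom y x;
  gcomp_assoc : forall x y z w (h : hom z w) (g : hom y z) (f : hom x y),
      gcomp h (gcomp g f) = gcomp (gcomp h g) f;
  gcomp_idl : forall x y (f : hom x y), gcomp (gid y) f = f;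
  gcomp_idr : forall x y (f : hom x y), gcomp f (gid x) = f;
  ginv_l : forall x y (f : hom x y), gcomp (ginv f) f = gid x;
  ginv_r : forall x y (f : hom x y), gcomp f (ginv f) = gid y }.
Arguments hom : clear implicits.
Arguments gid {g0} x.
Arguments gcomp {g0 x y z} _ _.
Arguments ginv {g0 x y} _.

Record Functor (C D : Gpd) : Type := {
  fob :> C -> D;
  fhom : forall x y, hom C x y -> hom D (fob x) (fob y);
  fhom_id : forall x, fhom (gid x) = gid (fob x);
  fhom_comp : forall x y z (g : hom C y z) (f : hom C x y),
      fhom (gcomp g f) = gcomp (fhom g) (fhom f) }.
Arguments fob {C D} _ _.
Arguments fhom {C D} _ {x y} _.
Arguments fhom_id {C D} _ x.
Arguments fhom_comp {C D} _ {x y z} _ _.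

Lemma Functor_eq (C D : Gpd) (o : C -> D)
  (h1 h2 : forall x y, hom C x y -> hom D (o x) (o y)) p1 q1 p2 q2 :
  (forall x y (f : hom C x y), h1 x y f = h2 x y f) ->
  @Build_Functor C D o h1 p1 q1 = @Build_Functor C D o h2 p2 q2.
Proof.
  intros H.
  assert (E : h1 = h2).
  { apply functional_extensionality_dep; intro x.
    apply functional_extensionality_dep; intro y.
    apply functional_extensionality; intro f. apply H. }
  subst h2. f_equal; apply proof_irrelevance.
Qed.

Definition Fid (C : Gpd) : Functor C C.
Proof.
  refine (@Build_Functor C C (fun x => x) (fun x y f => f) _ _); reflexivity.
Defined.

Definition Fcomp (C D E : Gpd) (F : Functor D E) (G : Functor C D) : Functor C E.
Proof.
  refine (@Build_Functor C E (fun x => F (G x)) (fun x y f => fhom F (fhom G f)) _ _).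
  - intro x; rewrite fhom_id; apply fhom_id.
  - intros; rewrite fhom_comp; apply fhom_comp.
Defined.

Lemma Fcomp_assoc (A B C D : Gpd) (F : Functor C D) (G : Functor B C) (H : Functor A B) :
  Fcomp F (Fcomp G H) = Fcomp (Fcomp F G) H.
Proof. destruct F, G, H; apply Functor_eq; reflexivity. Qed.

Lemma Fcomp_idl (C D : Gpd) (F : Functor C D) : Fcomp (Fid D) F = F.
Proof. destruct F; apply Functor_eq; reflexivity. Qed.

Lemma Fcomp_idr (C D : Gpd) (F : Functor C D) : Fcomp F (Fid C) = F.
Proof. destruct F; apply Functor_eq; reflexivity. Qed.

Lemma fhom_inv (C D : Gpd) (F : Functor C D) (x y : C) (f : hom C x y) :
  fhom F (ginv f) = ginv (fhom F f).
Proof.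
  rewrite <- (gcomp_idl (fhom F (ginv f))).
  rewrite <- (ginv_l (fhom F f)).
  rewrite <- gcomp_assoc, <- fhom_comp, ginv_r, fhom_id.
  apply gcomp_idr.
Qed.

Definition prod_gpd (C D : Gpd) : Gpd.
Proof.
  refine (@Build_Gpd (gpair C D)
    (fun p q => gpair (hom C (gfst p) (gfst q)) (hom D (gsnd p) (gsnd q)))
    (fun p => mkgpair (gid (gfst p)) (gid (gsnd p)))
    (fun p q r g f => mkgpair (gcomp (gfst g) (gfst f)) (gcomp (gsnd g) (gsnd f)))
    (fun p q f => mkgpair (ginv (gfst f)) (ginv (gsnd f))) _ _ _ _ _); intros; simpl.
  - rewrite !gcomp_assoc; reflexivity.
  - rewrite !gcomp_idl; reflexivity.
  - rewrite !gcomp_idr; reflexivity.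
  - rewrite !ginv_l; reflexivity.
  - rewrite !ginv_r; reflexivity.
Defined.

Definition Fp1 (C D : Gpd) : Functor (prod_gpd C D) C.
Proof.
  refine (@Build_Functor (prod_gpd C D) C (fun p => gfst p) (fun p q f => gfst f) _ _);
    reflexivity.
Defined.

Definition Fp2 (C D : Gpd) : Functor (prod_gpd C D) D.
Proof.
  refine (@Build_Functor (prod_gpd C D) D (fun p => gsnd p) (fun p q f => gsnd f) _ _);
    reflexivity.
Defined.

Definition Fpair (A C D : Gpd) (F : Functor A C) (G : Functor A D) :
  Functor A (prod_gpd C D).
Proof.
  refine (@Build_Functor A (prod_gpd C D) (fun x => mkgpair (F x) (G x))
            (fun x y f => mkgpair (fhom F f) (fhom G f)) _ _); intros; simpl.
  - rewrite !fhom_id; reflexivity.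
  - rewrite !fhom_comp; reflexivity.
Defined.

Lemma Fpair_comp (A B C D : Gpd) (F : Functor A C) (G : Functor A D) (K : Functor B A) :
  Fcomp (Fpair F G) K = Fpair (Fcomp F K) (Fcomp G K).
Proof. destruct F, G, K; apply Functor_eq; reflexivity. Qed.

Lemma Fp1_pair (A C D : Gpd) (F : Functor A C) (G : Functor A D) :
  Fcomp (Fp1 C D) (Fpair F G) = F.
Proof. destruct F, G; apply Functor_eq; reflexivity. Qed.

Lemma Fp2_pair (A C D : Gpd) (F : Functor A C) (G : Functor A D) :
  Fcomp (Fp2 C D) (Fpair F G) = G.
Proof. destruct F, G; apply Functor_eq; reflexivity. Qed.

Lemma Fpair_proj (C D : Gpd) : Fpair (Fp1 C D) (Fp2 C D) = Fid (prod_gpd C D).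
Proof. apply Functor_eq; reflexivity. Qed.

Record GpdInv : Type := {
  gpd :> Gpd;
  ginvol : Functor gpd gpd;
  ginvol_invol : Fcomp ginvol ginvol = Fid gpd }.

Record GMor (X Y : GpdInv) : Type := {
  mfun :> Functor X Y;
  mfun_comm : Fcomp mfun (ginvol X) = Fcomp (ginvol Y) mfun }.
Arguments mfun {X Y} _.
Arguments mfun_comm {X Y} _.

Definition Gid (X : GpdInv) : GMor X X.
Proof.
  refine (@Build_GMor X X (Fid X) _).
  rewrite Fcomp_idl, Fcomp_idr; reflexivity.
Defined.

Definition Gcomp (X Y Z : GpdInv) (g : GMor Y Z) (f : GMor X Y) : GMor X Z.
Proof.
  refine (@Build_GMor X Z (Fcomp g f) _).
  rewrite <- Fcomp_assoc, (mfun_comm f), Fcomp_assoc, (mfun_comm g), <- Fcomp_assoc.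
  reflexivity.
Defined.

Definition prod_inv (X Y : GpdInv) : GpdInv.
Proof.
  refine (@Build_GpdInv (prod_gpd X Y)
    (Fpair (Fcomp (ginvol X) (Fp1 X Y)) (Fcomp (ginvol Y) (Fp2 X Y))) _).
  rewrite Fpair_comp, <- !Fcomp_assoc, Fp1_pair, Fp2_pair, !Fcomp_assoc,
    (ginvol_invol X), (ginvol_invol Y), !Fcomp_idl.
  apply Fpair_proj.
Defined.

Definition Gpair (A X Y : GpdInv) (f : GMor A X) (g : GMor A Y) : GMor A (prod_inv X Y).
Proof.
  refine (@Build_GMor A (prod_inv X Y) (Fpair f g) _).
  simpl. rewrite !Fpair_comp, (mfun_comm f), (mfun_comm g), <- !Fcomp_assoc,
    Fp1_pair, Fp2_pair. reflexivity.
Defined.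

Definition Gdiag (X : GpdInv) : GMor X (prod_inv X X) := Gpair (Gid X) (Gid X).

Definition htrans (C : Gpd) (x y x' y' : C) (ex : x = x') (ey : y = y') (f : hom C x y) :
  hom C x' y' :=
  match ex in _ = a, ey in _ = b return hom C a b with eq_refl, eq_refl => f end.

Definition isofibration (E B : Gpd) (p : Functor E B) : Prop :=
  forall (e : E) (b : B) (phi : hom B (p e) b),
    exists (e' : E) (h : p e' = b) (psi : hom E e e'),
      htrans eq_refl h (fhom p psi) = phi.

(* natural isomorphism (in a groupoid every natural transformation is one) *)
Definition nat_iso (C D : Gpd) (F G : Functor C D) : Prop :=
  exists eta : forall x, hom D (F x) (G x),
    forall x y (phi : hom C x y), gcomp (fhom G phi) (eta x) = gcomp (eta y) (fhom F phi).

Definition gpd_equiv (C D : Gpd) (F : Functor C D) : Prop :=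
  exists G : Functor D C, nat_iso (Fcomp G F) (Fid C) /\ nat_iso (Fcomp F G) (Fid D).

Definition gpd_iso (C D : Gpd) (F : Functor C D) : Prop :=
  exists G : Functor D C, Fcomp G F = Fid C /\ Fcomp F G = Fid D.

Definition weq (X Y : GpdInv) (f : GMor X Y) : Prop := gpd_equiv (mfun f).
Definition fib (X Y : GpdInv) (f : GMor X Y) : Prop := isofibration (mfun f).
Definition tfib (X Y : GpdInv) (f : GMor X Y) : Prop := fib f /\ weq f.
Definition cof (A B : GpdInv) (i : GMor A B) : Prop :=
  forall (E Y : GpdInv) (p : GMor E Y), tfib p ->
  forall (u : GMor A E) (v : GMor B Y), Gcomp p u = Gcomp v i ->
  exists l : GMor B E, Gcomp l i = u /\ Gcomp p l = v.
Definition tcof (A B : GpdInv) (i : GMor A B) : Prop := cof i /\ weq i.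

Definition path_object (X P : GpdInv) (s : GMor X P) (p : GMor P (prod_inv X X)) : Prop :=
  tcof s /\ fib p /\ Gcomp p s = Gdiag X.

Definition right_homotopic (A X : GpdInv) (f g : GMor A X) : Prop :=
  exists (P : GpdInv) (s : GMor X P) (p : GMor P (prod_inv X X)),
    path_object s p /\ exists Hm : GMor A P, Gcomp p Hm = Gpair f g.

Definition right_homotopy_equivalence (X Y : GpdInv) (f : GMor X Y) : Prop :=
  exists g : GMor Y X,
    right_homotopic (Gcomp f g) (Gid Y) /\ right_homotopic (Gcomp g f) (Gid X).

Definition fixpt (X : GpdInv) : Type := { x : X | ginvol X x = x }.

Definition Gfull (X : GpdInv) : Gpd.
Proof.
  refine (@Build_Gpd (fixpt X) (fun x y => hom X (proj1_sig x) (proj1_sig y))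
    (fun x => gid (proj1_sig x)) (fun x y z g f => gcomp g f) (fun x y f => ginv f)
    _ _ _ _ _); intros.
  - apply gcomp_assoc.
  - apply gcomp_idl.
  - apply gcomp_idr.
  - apply ginv_l.
  - apply ginv_r.
Defined.

Lemma htrans_id (C : Gpd) (a b : C) (e : a = b) : htrans e e (gid a) = gid b.
Proof. destruct e; reflexivity. Qed.

Lemma htrans_comp (C : Gpd) (a b c a' b' c' : C) (ea : a = a') (eb : b = b') (ec : c = c')
  (g : hom C b c) (f : hom C a b) :
  htrans ea ec (gcomp g f) = gcomp (htrans eb ec g) (htrans ea eb f).
Proof. destruct ea, eb, ec; reflexivity. Qed.

Lemma htrans_inv (C : Gpd) (a b a' b' : C) (ea : a = a') (eb : b = b') (f : hom C a b) :
  htrans eb ea (ginv f) = ginv (htrans ea eb f).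
Proof. destruct ea, eb; reflexivity. Qed.

Lemma htrans_trans (C : Gpd) (a b c a' b' c' : C) (e1 : a = b) (e2 : b = c)
  (e1' : a' = b') (e2' : b' = c') (f : hom C a a') :
  htrans (eq_trans e1 e2) (eq_trans e1' e2') f = htrans e2 e2' (htrans e1 e1' f).
Proof. destruct e2, e2', e1, e1'; reflexivity. Qed.

Lemma htrans_sym (C : Gpd) (a b a' b' : C) (e : a = b) (e' : a' = b')
  (f : hom C a a') (g : hom C b b') :
  htrans e e' f = g -> htrans (eq_sym e) (eq_sym e') g = f.
Proof. destruct e, e'; simpl; intros ->; reflexivity. Qed.

Lemma htrans_fmap (C D : Gpd) (F : Functor C D) (a b a' b' : C) (e : a = b) (e' : a' = b')
  (f : hom C a a') :
  htrans (f_equal (fob F) e) (f_equal (fob F) e') (fhom F f) = fhom F (htrans e e' f).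
Proof. destruct e, e'; reflexivity. Qed.

Lemma functor_eq_hom (C D : Gpd) (F G : Functor C D) (E : F = G) (x y : C) (phi : hom C x y) :
  htrans (f_equal (fun K : Functor C D => fob K x) E)
         (f_equal (fun K : Functor C D => fob K y) E) (fhom F phi) = fhom G phi.
Proof. destruct E; reflexivity. Qed.

Definition fixed_hom (X : GpdInv) (x y : fixpt X) : Type :=
  { phi : hom X (proj1_sig x) (proj1_sig y) |
    htrans (proj2_sig x) (proj2_sig y) (fhom (ginvol X) phi) = phi }.

Lemma fixed_id (X : GpdInv) (x : fixpt X) :
  htrans (proj2_sig x) (proj2_sig x) (fhom (ginvol X) (gid (proj1_sig x))) = gid (proj1_sig x).
Proof. rewrite fhom_id; apply htrans_id. Qed.

Lemma fixed_comp (X : GpdInv) (x y z : fixpt X) (g : fixed_hom y z) (f : fixed_hom x y) :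
  htrans (proj2_sig x) (proj2_sig z) (fhom (ginvol X) (gcomp (proj1_sig g) (proj1_sig f)))
  = gcomp (proj1_sig g) (proj1_sig f).
Proof.
  rewrite fhom_comp, (htrans_comp _ (proj2_sig y)), (proj2_sig g), (proj2_sig f).
  reflexivity.
Qed.

Lemma fixed_inv (X : GpdInv) (x y : fixpt X) (f : fixed_hom x y) :
  htrans (proj2_sig y) (proj2_sig x) (fhom (ginvol X) (ginv (proj1_sig f)))
  = ginv (proj1_sig f).
Proof. rewrite fhom_inv, htrans_inv, (proj2_sig f); reflexivity. Qed.

Definition Gfixed (X : GpdInv) : Gpd.
Proof.
  refine (@Build_Gpd (fixpt X) (@fixed_hom X)
    (fun x => exist _ (gid (proj1_sig x)) (fixed_id x))
    (fun x y z g f => exist _ (gcomp (proj1_sig g) (proj1_sig f)) (fixed_comp g f))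
    (fun x y f => exist _ (ginv (proj1_sig f)) (fixed_inv f))
    _ _ _ _ _); intros;
    repeat match goal with h : fixed_hom _ _ |- _ => destruct h end;
    apply subset_eq_compat; simpl.
  - apply gcomp_assoc.
  - apply gcomp_idl.
  - apply gcomp_idr.
  - apply ginv_l.
  - apply ginv_r.
Defined.

Definition mcomm_ob (X Y : GpdInv) (f : GMor X Y) (x : X) :
  f (ginvol X x) = ginvol Y (f x) :=
  f_equal (fun K : Functor X Y => fob K x) (mfun_comm f).

Definition fixmap (X Y : GpdInv) (f : GMor X Y) (x : fixpt X) : fixpt Y :=
  exist _ (f (proj1_sig x))
    (eq_trans (eq_sym (mcomm_ob f (proj1_sig x))) (f_equal (fob f) (proj2_sig x))).

Definition Ffull (X Y : GpdInv) (f : GMor X Y) : Functor (Gfull X) (Gfull Y).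
Proof.
  refine (@Build_Functor (Gfull X) (Gfull Y) (fixmap f)
            (fun x y phi => fhom f phi) _ _); intros; simpl.
  - apply fhom_id.
  - apply fhom_comp.
Defined.

Lemma fixed_transfer (X Y : GpdInv) (f : GMor X Y) (x y : X)
  (px : ginvol X x = x) (py : ginvol X y = y) (phi : hom X x y) :
  htrans px py (fhom (ginvol X) phi) = phi ->
  htrans (eq_trans (eq_sym (mcomm_ob f x)) (f_equal (fob f) px))
         (eq_trans (eq_sym (mcomm_ob f y)) (f_equal (fob f) py))
         (fhom (ginvol Y) (fhom f phi)) = fhom f phi.
Proof.
  intro Hphi.
  rewrite htrans_trans.
  pose proof (htrans_sym (functor_eq_hom (mfun_comm f) phi)) as K.
  cbn [Fcomp fhom fob] in K. unfold mcomm_ob.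
  rewrite K, htrans_fmap, Hphi. reflexivity.
Qed.

Definition Ffixed (X Y : GpdInv) (f : GMor X Y) : Functor (Gfixed X) (Gfixed Y).
Proof.
  refine (@Build_Functor (Gfixed X) (Gfixed Y) (fixmap f)
     (fun x y phi => exist _ (fhom f (proj1_sig phi))
        (@fixed_transfer X Y f _ _ (proj2_sig x) (proj2_sig y) _ (proj2_sig phi))) _ _);
    intros; apply subset_eq_compat; simpl.
  - apply fhom_id.
  - apply fhom_comp.
Defined.

Definition bijection (A B : Type) (h : A -> B) : Prop :=
  exists g : B -> A, (forall a, g (h a) = a) /\ (forall b, h (g b) = b).

(* Main.v *)
Require Import Defs.
From Stdlib Require Import FunctionalExtensionality ProofIrrelevance ClassicalEpsilon Classical PropExtensionality.

Set Implicit Arguments.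
Unset Strict Implicit.

Lemma UIP' {A : Type} {x y : A} (e1 e2 : x = y) : e1 = e2.
Proof. apply proof_irrelevance. Qed.

Definition heq (C : Gpd) (x y x' y' : C) (f : hom C x y) (g : hom C x' y') : Prop :=
  exists (e1 : x = x') (e2 : y = y'), htrans e1 e2 f = g.

Lemma heq_refl (C : Gpd) (x y : C) (f : hom C x y) : heq f f.
Proof. exists eq_refl, eq_refl; reflexivity. Qed.

Lemma heq_sym (C : Gpd) (x y x' y' : C) (f : hom C x y) (g : hom C x' y') :
  heq f g -> heq g f.
Proof. intros (e1 & e2 & H). destruct e1, e2. simpl in H. subst. apply heq_refl. Qed.

Lemma heq_trans (C : Gpd) (x y x' y' x'' y'' : C) (f : hom C x y) (g : hom C x' y')
  (h : hom C x'' y'') : heq f g -> heq g h -> heq f h.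
Proof.
  intros (e1 & e2 & H) (e3 & e4 & H'). destruct e1, e2, e3, e4. simpl in *. subst.
  apply heq_refl.
Qed.

Lemma heq_eq (C : Gpd) (x y : C) (f g : hom C x y) : heq f g -> f = g.
Proof.
  intros (e1 & e2 & H). rewrite (UIP' e1 eq_refl), (UIP' e2 eq_refl) in H. exact H.
Qed.

Lemma heq_htrans (C : Gpd) (x y x' y' : C) (e1 : x = x') (e2 : y = y') (f : hom C x y) :
  heq (htrans e1 e2 f) f.
Proof. exists (eq_sym e1), (eq_sym e2). destruct e1, e2; reflexivity. Qed.

Lemma heq_comp (C : Gpd) (x y z x' y' z' : C) (g : hom C y z) (f : hom C x y)
  (g' : hom C y' z') (f' : hom C x' y') :
  heq g g' -> heq f f' -> heq (gcomp g f) (gcomp g' f').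
Proof.
  intros (a & b & H1) (c & d & H2). destruct a, b, c.
  rewrite (UIP' d eq_refl) in H2. simpl in *. subst. apply heq_refl.
Qed.

Lemma heq_inv (C : Gpd) (x y x' y' : C) (f : hom C x y) (f' : hom C x' y') :
  heq f f' -> heq (ginv f) (ginv f').
Proof. intros (a & b & H). destruct a, b. simpl in *. subst. apply heq_refl. Qed.

Lemma heq_fhom (C D : Gpd) (F : Functor C D) (x y x' y' : C) (f : hom C x y)
  (f' : hom C x' y') : heq f f' -> heq (fhom F f) (fhom F f').
Proof. intros (a & b & H). destruct a, b. simpl in *. subst. apply heq_refl. Qed.

Lemma heq_id (C : Gpd) (x x' : C) : x = x' -> heq (gid x) (gid x').
Proof. intros e; destruct e; apply heq_refl. Qed.

Lemma heq_src (C : Gpd) (x y x' y' : C) (f : hom C x y) (g : hom C x' y') :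
  heq f g -> x = x'.
Proof. intros (a & _ & _); exact a. Qed.

Lemma heq_tgt (C : Gpd) (x y x' y' : C) (f : hom C x y) (g : hom C x' y') :
  heq f g -> y = y'.
Proof. intros (_ & a & _); exact a. Qed.

Lemma Functor_eq_heq (C D : Gpd) (F G : Functor C D) :
  (forall x, F x = G x) -> (forall x y (f : hom C x y), heq (fhom F f) (fhom G f)) -> F = G.
Proof.
  destruct F as [o1 h1 p1 q1], G as [o2 h2 p2 q2]; simpl. intros e H.
  assert (E : o1 = o2) by (apply functional_extensionality; exact e). subst o2.
  apply Functor_eq. intros; apply heq_eq; apply H.
Qed.

Lemma heq_of_Feq (C D : Gpd) (F G : Functor C D) (x y : C) (f : hom C x y) :
  F = G -> heq (fhom F f) (fhom G f).
Proof. intros ->; apply heq_refl. Qed.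

Lemma ob_of_Feq (C D : Gpd) (F G : Functor C D) (x : C) : F = G -> F x = G x.
Proof. intros ->; reflexivity. Qed.

Lemma GMor_eq (X Y : GpdInv) (f g : GMor X Y) : mfun f = mfun g -> f = g.
Proof.
  destruct f as [f pf], g as [g pg]; simpl; intros E; subst g.
  f_equal; apply proof_irrelevance.
Qed.

Definition faithful (C D : Gpd) (F : Functor C D) : Prop :=
  forall x y (u v : hom C x y), fhom F u = fhom F v -> u = v.


Lemma heq_faithful (C D : Gpd) (F : Functor C D) (Hf : faithful F)
  (a b a' b' : C) (u : hom C a b) (v : hom C a' b') :
  a = a' -> b = b' -> heq (fhom F u) (fhom F v) -> heq u v.
Proof.
  intros e1 e2 H. destruct e1, e2. apply heq_eq in H. apply Hf in H. subst; apply heq_refl.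
Qed.

Lemma faithful_unique (D E Z : Gpd) (q : Functor E Z) (Hq : faithful q)
  (L1 L2 : Functor D E) :
  (forall x, L1 x = L2 x) -> Fcomp q L1 = Fcomp q L2 -> L1 = L2.
Proof.
  intros e H. apply Functor_eq_heq; [exact e|]. intros x y f.
  apply (heq_faithful Hq (e x) (e y)).
  exact (heq_of_Feq f H).
Qed.

Lemma heq_invol (X : GpdInv) (x y : X) (f : hom X x y) :
  heq (fhom (ginvol X) (fhom (ginvol X) f)) f.
Proof. exact (heq_of_Feq f (ginvol_invol X)). Qed.

Lemma ob_invol (X : GpdInv) (x : X) : ginvol X (ginvol X x) = x.
Proof. exact (ob_of_Feq x (ginvol_invol X)). Qed.

Lemma heq_comm (X Y : GpdInv) (m : GMor X Y) (x y : X) (f : hom X x y) :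
  heq (fhom m (fhom (ginvol X) f)) (fhom (ginvol Y) (fhom m f)).
Proof. exact (heq_of_Feq f (mfun_comm m)). Qed.

Lemma ob_comm (X Y : GpdInv) (m : GMor X Y) (x : X) :
  m (ginvol X x) = ginvol Y (m x).
Proof. exact (ob_of_Feq x (mfun_comm m)). Qed.

Lemma ni_refl (C D : Gpd) (F : Functor C D) : nat_iso F F.
Proof. exists (fun x => gid (F x)). intros. rewrite gcomp_idl, gcomp_idr; reflexivity. Qed.

Lemma ni_sym (C D : Gpd) (F G : Functor C D) : nat_iso F G -> nat_iso G F.
Proof.
  intros [eta H]. exists (fun x => ginv (eta x)). intros x y f.
  specialize (H x y f).
  apply (f_equal (fun k => gcomp (ginv (eta y)) (gcomp k (ginv (eta x))))) in H.
  rewrite !gcomp_assoc, ginv_l, gcomp_idl in H.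
  rewrite <- !gcomp_assoc, ginv_r, gcomp_idr in H. symmetry; exact H.
Qed.

Lemma ni_trans (C D : Gpd) (F G K : Functor C D) :
  nat_iso F G -> nat_iso G K -> nat_iso F K.
Proof.
  intros [a Ha] [b Hb]. exists (fun x => gcomp (b x) (a x)). intros x y f.
  rewrite gcomp_assoc, Hb, <- gcomp_assoc, Ha, gcomp_assoc; reflexivity.
Qed.

Lemma ni_whiskL (C D E : Gpd) (K : Functor D E) (F G : Functor C D) :
  nat_iso F G -> nat_iso (Fcomp K F) (Fcomp K G).
Proof.
  intros [a Ha]. exists (fun x => fhom K (a x)). intros x y f. simpl.
  rewrite <- !fhom_comp, Ha; reflexivity.
Qed.

Lemma ni_whiskR (B C D : Gpd) (K : Functor B C) (F G : Functor C D) :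
  nat_iso F G -> nat_iso (Fcomp F K) (Fcomp G K).
Proof. intros [a Ha]. exists (fun x => a (K x)). intros x y f. simpl. apply Ha. Qed.

Lemma ni_eq (C D : Gpd) (F G : Functor C D) : F = G -> nat_iso F G.
Proof. intros ->; apply ni_refl. Qed.
Lemma gcancel_r (C : Gpd) (x y z : C) (u v : hom C y z) (h : hom C x y) :
  gcomp u h = gcomp v h -> u = v.
Proof.
  intros H. apply (f_equal (fun k => gcomp k (ginv h))) in H.
  rewrite <- !gcomp_assoc, ginv_r, !gcomp_idr in H; exact H.
Qed.

Lemma gcancel_l (C : Gpd) (x y z : C) (u v : hom C x y) (h : hom C y z) :
  gcomp h u = gcomp h v -> u = v.
Proof.
  intros H. apply (f_equal (fun k => gcomp (ginv h) k)) in H.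
  rewrite !gcomp_assoc, ginv_l, !gcomp_idl in H; exact H.
Qed.

Lemma equiv_faithful (C D : Gpd) (F : Functor C D) : gpd_equiv F -> faithful F.
Proof.
  intros (G & [eta He] & _) x y u v Huv.
  pose proof (He x y u) as H1. pose proof (He x y v) as H2. simpl in H1, H2.
  rewrite Huv in H1. rewrite <- H2 in H1. apply gcancel_r in H1; exact H1.
Qed.

Lemma equiv_sym (C D : Gpd) (F : Functor C D) :
  gpd_equiv F -> exists G : Functor D C, gpd_equiv G.
Proof. intros (G & H1 & H2). exists G, F. split; assumption. Qed.

Lemma equiv_full (C D : Gpd) (F : Functor C D) (HF : gpd_equiv F) (x y : C)
  (chi : hom D (F x) (F y)) : exists u : hom C x y, fhom F u = chi.
Proof.
  pose proof HF as (G & [eta He] & H2).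
  assert (HG : gpd_equiv G) by (exists F; split; [exact H2 | exists eta; exact He]).
  exists (gcomp (eta y) (gcomp (fhom G chi) (ginv (eta x)))).
  apply (equiv_faithful HG).
  set (u := gcomp (eta y) (gcomp (fhom G chi) (ginv (eta x)))).
  pose proof (He x y u) as H. simpl in H.
  transitivity (gcomp (ginv (eta y)) (gcomp u (eta x))).
  - apply (gcancel_l (h:=eta y)). rewrite gcomp_assoc, ginv_r, gcomp_idl. symmetry; exact H.
  - unfold u. rewrite !gcomp_assoc, ginv_l, gcomp_idl, <- gcomp_assoc, ginv_l, gcomp_idr.
    reflexivity.
Qed.

Definition fpre (C D : Gpd) (F : Functor C D) (HF : gpd_equiv F) (x y : C)
  (chi : hom D (F x) (F y)) : hom C x y :=
  proj1_sig (constructive_indefinite_description _ (equiv_full HF chi)).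

Lemma fpre_spec (C D : Gpd) (F : Functor C D) (HF : gpd_equiv F) (x y : C)
  (chi : hom D (F x) (F y)) : fhom F (fpre HF chi) = chi.
Proof. unfold fpre. destruct constructive_indefinite_description; assumption. Qed.

Lemma equiv_data (C D : Gpd) (F : Functor C D) :
  gpd_equiv F -> { G : Functor D C & forall y, hom D (F (G y)) y }.
Proof.
  intros H. apply constructive_indefinite_description in H. destruct H as [G [_ H]].
  apply constructive_indefinite_description in H. destruct H as [eta _].
  exists G. exact eta.
Qed.

Lemma tfib_surj (E Z : Gpd) (q : Functor E Z) :
  isofibration q -> gpd_equiv q -> forall z, exists e, q e = z.
Proof.
  intros Hf He z. destruct (equiv_data He) as [G eps].
  destruct (Hf (G z) z (eps z)) as (e' & h & _). exists e'; exact h.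
Qed.

Definition PullGpd (C : Gpd) (O : Type) (tau : O -> C) : Gpd.
Proof.
  refine (@Build_Gpd O (fun a b => hom C (tau a) (tau b))
    (fun a => gid (tau a)) (fun a b c g f => gcomp g f) (fun a b f => ginv f)
    _ _ _ _ _); intros.
  - apply gcomp_assoc.
  - apply gcomp_idl.
  - apply gcomp_idr.
  - apply ginv_l.
  - apply ginv_r.
Defined.

Definition Ppi (C : Gpd) (O : Type) (tau : O -> C) : Functor (PullGpd tau) C.
Proof.
  refine (@Build_Functor (PullGpd tau) C tau (fun a b f => f) _ _); reflexivity.
Defined.

Lemma Ppi_faithful (C : Gpd) (O : Type) (tau : O -> C) : faithful (Ppi tau).
Proof. intros x y u v H; exact H. Qed.

Definition PullInvF (C : GpdInv) (O : Type) (iota : O -> O) (tau : O -> C)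
  (Ht : forall o, tau (iota o) = ginvol C (tau o)) : Functor (PullGpd tau) (PullGpd tau).
Proof.
  refine (@Build_Functor (PullGpd tau) (PullGpd tau) iota
    (fun a b f => htrans (eq_sym (Ht a)) (eq_sym (Ht b)) (fhom (ginvol C) f)) _ _).
  - intros x; simpl. rewrite fhom_id. apply htrans_id.
  - intros x y z g f; simpl. rewrite fhom_comp. apply htrans_comp.
Defined.

Lemma Ppi_comm (C : GpdInv) (O : Type) (iota : O -> O) (tau : O -> C)
  (Ht : forall o, tau (iota o) = ginvol C (tau o)) :
  Fcomp (Ppi tau) (PullInvF Ht) = Fcomp (ginvol C) (Ppi tau).
Proof.
  apply Functor_eq_heq.
  - intro x; simpl; apply Ht.
  - intros x y f; simpl. apply heq_htrans.
Qed.

Lemma PullInv_invol (C : GpdInv) (O : Type) (iota : O -> O) (tau : O -> C)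
  (Hii : forall o, iota (iota o) = o)
  (Ht : forall o, tau (iota o) = ginvol C (tau o)) :
  Fcomp (PullInvF Ht) (PullInvF Ht) = Fid (PullGpd tau).
Proof.
  apply (faithful_unique (@Ppi_faithful C O tau)).
  - intro x; simpl; apply Hii.
  - rewrite Fcomp_assoc, Ppi_comm, <- Fcomp_assoc, Ppi_comm, Fcomp_assoc,
      (ginvol_invol C), Fcomp_idl, Fcomp_idr. reflexivity.
Qed.

Definition PullInv (C : GpdInv) (O : Type) (iota : O -> O) (tau : O -> C)
  (Hii : forall o, iota (iota o) = o)
  (Ht : forall o, tau (iota o) = ginvol C (tau o)) : GpdInv :=
  @Build_GpdInv (PullGpd tau) (PullInvF Ht) (PullInv_invol Hii Ht).

Definition PpiG (C : GpdInv) (O : Type) (iota : O -> O) (tau : O -> C)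
  (Hii : forall o, iota (iota o) = o)
  (Ht : forall o, tau (iota o) = ginvol C (tau o)) : GMor (PullInv Hii Ht) C :=
  @Build_GMor (PullInv Hii Ht) C (Ppi tau) (Ppi_comm Ht).

Definition LiftF (D E Z : Gpd) (q : Functor E Z)
  (pre : forall a b, hom Z (q a) (q b) -> hom E a b)
  (Hpre : forall a b chi, fhom q (pre a b chi) = chi) (Hq : faithful q)
  (k : D -> E) (hm : forall x y, hom D x y -> hom Z (q (k x)) (q (k y)))
  (hid : forall x, hm x x (gid x) = gid _)
  (hcomp : forall x y z (g : hom D y z) (f : hom D x y),
      hm x z (gcomp g f) = gcomp (hm _ _ g) (hm _ _ f)) : Functor D E.
Proof.
  refine (@Build_Functor D E k (fun x y f => pre _ _ (hm x y f)) _ _).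
  - intros x. apply Hq. rewrite Hpre, hid, fhom_id; reflexivity.
  - intros x y z g f. apply Hq. rewrite fhom_comp, !Hpre, hcomp; reflexivity.
Defined.

Lemma LiftF_q (D E Z : Gpd) (q : Functor E Z) pre Hpre Hq (k : D -> E) hm hid hcomp
  (x y : D) (f : hom D x y) :
  fhom q (fhom (@LiftF D E Z q pre Hpre Hq k hm hid hcomp) f) = hm x y f.
Proof. simpl. apply Hpre. Qed.

Definition hmV (D Z E : Gpd) (q : Functor E Z) (k : D -> E) (V : Functor D Z)
  (e : forall x, q (k x) = V x) (x y : D) (f : hom D x y) : hom Z (q (k x)) (q (k y)) :=
  htrans (eq_sym (e x)) (eq_sym (e y)) (fhom V f).

Lemma hmV_id (D Z E : Gpd) (q : Functor E Z) (k : D -> E) (V : Functor D Z) e x :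
  @hmV D Z E q k V e x x (gid x) = gid _.
Proof. unfold hmV. rewrite fhom_id. apply htrans_id. Qed.

Lemma hmV_comp (D Z E : Gpd) (q : Functor E Z) (k : D -> E) (V : Functor D Z) e
  x y z (g : hom D y z) (f : hom D x y) :
  @hmV D Z E q k V e x z (gcomp g f) = gcomp (hmV e g) (hmV e f).
Proof. unfold hmV. rewrite fhom_comp. apply htrans_comp. Qed.

Definition LiftV (D E Z : Gpd) (q : Functor E Z)
  (pre : forall a b, hom Z (q a) (q b) -> hom E a b)
  (Hpre : forall a b chi, fhom q (pre a b chi) = chi) (Hq : faithful q)
  (k : D -> E) (V : Functor D Z) (e : forall x, q (k x) = V x) : Functor D E :=
  @LiftF D E Z q pre Hpre Hq k (hmV e) (hmV_id e) (hmV_comp e).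

Lemma LiftV_q (D E Z : Gpd) (q : Functor E Z) pre Hpre Hq (k : D -> E) (V : Functor D Z)
  (e : forall x, q (k x) = V x) :
  Fcomp q (@LiftV D E Z q pre Hpre Hq k V e) = V.
Proof.
  apply Functor_eq_heq.
  - exact e.
  - intros x y f. simpl. rewrite Hpre. apply heq_htrans.
Qed.
Lemma heq_pull (C : Gpd) (O : Type) (tau : O -> C) (a b a' b' : O)
  (f : hom (PullGpd tau) a b) (g : hom (PullGpd tau) a' b') :
  a = a' -> b = b' -> @heq C _ _ _ _ f g -> @heq (PullGpd tau) _ _ _ _ f g.
Proof.
  intros e1 e2 H. destruct e1, e2. apply heq_eq in H. subst. apply heq_refl.
Qed.


Definition Eiota (A P : GpdInv) (o : (A + P * bool)%type) : (A + P * bool)%type :=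
  match o with inl x => inl (ginvol A x) | inr (z, t) => inr (ginvol P z, negb t) end.

Definition Etau (A P : GpdInv) (s : GMor A P) (o : (A + P * bool)%type) : P :=
  match o with inl x => s x | inr (z, _) => z end.

Lemma Eiota_invol (A P : GpdInv) (o : (A + P * bool)%type) :
  Eiota (Eiota o) = o.
Proof.
  destruct o as [x | [z t]]; simpl; f_equal.
  - apply ob_invol.
  - rewrite ob_invol, Bool.negb_involutive; reflexivity.
Qed.

Lemma Etau_comm (A P : GpdInv) (s : GMor A P) (o : (A + P * bool)%type) :
  Etau s (Eiota o) = ginvol P (Etau s o).
Proof. destruct o as [x | [z t]]; simpl; [apply ob_comm | reflexivity]. Qed.

Lemma tcof_fix (A P : GpdInv) (s : GMor A P) : cof s ->
  forall z : P, ginvol P z = z -> exists x : A, ginvol A x = x /\ s x = z.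
Proof.
  intros Hc z Hz.
  set (E := PullInv (@Eiota_invol A P) (Etau_comm s)).
  set (q := PpiG (@Eiota_invol A P) (Etau_comm s)).
  assert (Hq : tfib q).
  { split.
    - intros e b phi. exists (inr (b, false)), eq_refl, phi. reflexivity.
    - unshelve eexists.
      + refine (@Build_Functor P E (fun z => inr (z, false)) (fun a b f => f) _ _);
          reflexivity.
      + split.
        * exists (fun e => gid (Etau s e)). intros x y f. simpl.
          rewrite gcomp_idl, gcomp_idr; reflexivity.
        * exists (fun z => gid z). intros x y f. simpl.
          rewrite gcomp_idl, gcomp_idr; reflexivity. }
  unshelve eset (u := _ : GMor A E).
  { unshelve refine (@Build_GMor A E _ _).
    - refine (@Build_Functor A E (fun x => inl x) (fun x y f => fhom s f) _ _).
      + intros; apply fhom_id.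
      + intros; apply fhom_comp.
    - apply Functor_eq_heq.
      + reflexivity.
      + intros x y f. apply heq_pull; try reflexivity. simpl.
        eapply heq_trans; [apply heq_comm|]. apply heq_sym, heq_htrans. }
  destruct (Hc E P q Hq u (Gid P)) as (l & Hl1 & Hl2).
  { apply GMor_eq. apply Functor_eq_heq; [reflexivity|]. intros; apply heq_refl. }
  pose proof (ob_comm l z) as H1. rewrite Hz in H1.
  pose proof (ob_of_Feq z (f_equal (@mfun _ _) Hl2)) as H2. simpl in H2.
  change (Etau s (l z) = z) in H2.
  change (ginvol E (l z)) with (Eiota (l z)) in H1.
  destruct (l z) as [x | [w t]]; simpl in H1, H2.
  - injection H1 as H1. exists x; split; [symmetry; exact H1 | exact H2].
  - injection H1 as _ H1. destruct t; discriminate H1.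
Qed.
Lemma ni_section (X P : Gpd) (s : Functor X P) (r : Functor P X) (Q : Functor P X) :
  nat_iso (Fcomp s r) (Fid P) -> Fcomp Q s = Fid X -> nat_iso Q r.
Proof.
  intros Hsr HQ.
  pose proof (ni_whiskL Q (ni_sym Hsr)) as H.
  rewrite Fcomp_idr, Fcomp_assoc, HQ, Fcomp_idl in H. exact H.
Qed.

Lemma rh_data (A X : GpdInv) (f g : GMor A X) : right_homotopic f g ->
  exists (P : GpdInv) (s : GMor X P) (p : GMor P (prod_inv X X)) (Hm : GMor A P),
    tcof s /\ Fcomp (mfun p) (mfun s) = Fpair (Fid X) (Fid X) /\
    Fcomp (mfun p) (mfun Hm) = Fpair (mfun f) (mfun g).
Proof.
  intros (P & s & p & (Hs & Hp & Hps) & Hm & HH).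
  exists P, s, p, Hm. split; [exact Hs|]. split.
  - exact (f_equal (@mfun _ _) Hps).
  - exact (f_equal (@mfun _ _) HH).
Qed.

Lemma rh_niso (A X : GpdInv) (f g : GMor A X) :
  right_homotopic f g -> nat_iso (mfun f) (mfun g).
Proof.
  intros H. destruct (rh_data H) as (P & s & p & Hm & [_ Hw] & Hps & HH).
  destruct Hw as (r & _ & Hsr).
  assert (H1 : nat_iso (Fcomp (Fp1 X X) (mfun p)) r).
  { apply (ni_section Hsr). rewrite <- Fcomp_assoc. etransitivity; [apply f_equal; exact Hps|]. apply Fp1_pair. }
  assert (H2 : nat_iso (Fcomp (Fp2 X X) (mfun p)) r).
  { apply (ni_section Hsr). rewrite <- Fcomp_assoc. etransitivity; [apply f_equal; exact Hps|]. apply Fp2_pair. }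
  pose proof (ni_whiskR (mfun Hm) (ni_trans H1 (ni_sym H2))) as H3.
  assert (E1 : Fcomp (Fcomp (Fp1 X X) (mfun p)) (mfun Hm) = mfun f).
  { rewrite <- Fcomp_assoc. etransitivity; [apply f_equal; exact HH|]. apply Fp1_pair. }
  assert (E2 : Fcomp (Fcomp (Fp2 X X) (mfun p)) (mfun Hm) = mfun g).
  { rewrite <- Fcomp_assoc. etransitivity; [apply f_equal; exact HH|]. apply Fp2_pair. }
  rewrite <- E1, <- E2. exact H3.
Qed.

Lemma rh_fix (A X : GpdInv) (f g : GMor A X) :
  right_homotopic f g -> forall x : A, ginvol A x = x -> f x = g x.
Proof.
  intros H x Hx. destruct (rh_data H) as (P & s & p & Hm & [Hc _] & Hps & HH).
  pose proof (ob_comm Hm x) as E. rewrite Hx in E.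
  destruct (tcof_fix Hc (eq_sym E)) as (x0 & _ & Hx0).
  pose proof (ob_of_Feq x HH) as E1. pose proof (ob_of_Feq x0 Hps) as E2.
  simpl in E1, E2. rewrite <- Hx0, E2 in E1.
  pose proof (f_equal gfst E1) as F1. pose proof (f_equal gsnd E1) as F2.
  simpl in F1, F2. rewrite <- F1, <- F2. reflexivity.
Qed.

Lemma fix_eq (X : GpdInv) (a b : fixpt X) : proj1_sig a = proj1_sig b -> a = b.
Proof.
  destruct a as [a pa], b as [b pb]; simpl; intros E; subst b. f_equal.
  apply proof_irrelevance.
Qed.

Lemma rhe_weq (X Y : GpdInv) (f : GMor X Y) : right_homotopy_equivalence f -> weq f.
Proof.
  intros (g & H1 & H2). exists (mfun g). split.
  - exact (rh_niso H2).
  - exact (rh_niso H1).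
Qed.

Lemma rhe_bij (X Y : GpdInv) (f : GMor X Y) :
  right_homotopy_equivalence f -> bijection (fixmap f).
Proof.
  intros (g & H1 & H2). exists (fixmap g). split.
  - intros [x px]. apply fix_eq. simpl. exact (rh_fix H2 px).
  - intros [y py]. apply fix_eq. simpl. exact (rh_fix H1 py).
Qed.
Lemma iso_bij (C D : Gpd) (q : Functor C D) : gpd_iso q -> bijection (fob q).
Proof.
  intros (G & H1 & H2). exists (fob G). split.
  - intro a. exact (ob_of_Feq a H1).
  - intro b. exact (ob_of_Feq b H2).
Qed.

Lemma bij_iso (C D : Gpd) (q : Functor C D)
  (pre : forall a b, hom D (q a) (q b) -> hom C a b)
  (Hpre : forall a b chi, fhom q (pre a b chi) = chi) (Hq : faithful q) :
  bijection (fob q) -> gpd_iso q.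
Proof.
  intros (gi & H1 & H2).
  exists (@LiftV D C D q pre Hpre Hq gi (Fid D) H2). split.
  - apply (faithful_unique Hq).
    + intro a; simpl. apply H1.
    + rewrite Fcomp_assoc, LiftV_q, Fcomp_idl, Fcomp_idr; reflexivity.
  - apply LiftV_q.
Qed.

Lemma Ffull_faithful (X Y : GpdInv) (f : GMor X Y) (HF : weq f) : faithful (Ffull f).
Proof. intros a b u v H. exact (equiv_faithful HF H). Qed.

Lemma full_iff (X Y : GpdInv) (f : GMor X Y) (HF : weq f) :
  gpd_iso (Ffull f) <-> bijection (fixmap f).
Proof.
  split.
  - apply iso_bij.
  - apply (@bij_iso _ _ (Ffull f) (fun a b chi => @fpre _ _ _ HF (proj1_sig a) (proj1_sig b) chi)).
    + intros a b chi; simpl; apply (@fpre_spec _ _ _ HF (proj1_sig a) (proj1_sig b)).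
    + apply Ffull_faithful; exact HF.
Qed.

Lemma pre_fixed (X Y : GpdInv) (f : GMor X Y) (HF : weq f) (a b : fixpt X)
  (chi : fixed_hom (fixmap f a) (fixmap f b)) :
  htrans (proj2_sig a) (proj2_sig b) (fhom (ginvol X) (fpre HF (proj1_sig chi)))
  = fpre HF (proj1_sig chi).
Proof.
  apply (equiv_faithful HF). rewrite fpre_spec. apply heq_eq.
  eapply heq_trans; [apply heq_fhom, heq_htrans|].
  eapply heq_trans; [apply heq_comm|]. rewrite fpre_spec.
  destruct chi as [c pc]; simpl.
  eapply heq_trans; [apply heq_sym, (heq_htrans (proj2_sig (fixmap f a)) (proj2_sig (fixmap f b)))|].
  exists eq_refl, eq_refl; exact pc.
Qed.

Definition fixpre (X Y : GpdInv) (f : GMor X Y) (HF : weq f) (a b : fixpt X)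
  (chi : fixed_hom (fixmap f a) (fixmap f b)) : fixed_hom a b :=
  exist _ (fpre HF (proj1_sig chi)) (pre_fixed HF chi).

Lemma fixed_iff (X Y : GpdInv) (f : GMor X Y) (HF : weq f) :
  gpd_iso (Ffixed f) <-> bijection (fixmap f).
Proof.
  split.
  - apply iso_bij.
  - apply (@bij_iso _ _ (Ffixed f) (@fixpre X Y f HF)).
    + intros a b chi. destruct chi as [c pc]. apply subset_eq_compat. simpl.
      apply fpre_spec.
    + intros a b [u pu] [v pv] H. apply subset_eq_compat.
      apply (f_equal (@proj1_sig _ _)) in H. simpl in H. exact (equiv_faithful HF H).
Qed.
(* A path object *)
Record Tri (X : Gpd) : Type := mkT { t1 : X; t2 : X; ta : hom X t1 t2 }.
Arguments mkT {X} t1 t2 ta.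
Arguments t1 {X} _.
Arguments t2 {X} _.
Arguments ta {X} _.

Lemma Tri_eq (X : Gpd) (x y x' y' : X) (a : hom X x y) (a' : hom X x' y') :
  heq a a' -> mkT x y a = mkT x' y' a'.
Proof. intros (e1 & e2 & H). destruct e1, e2. simpl in H. subst. reflexivity. Qed.

Definition Tsig (X : GpdInv) (r : Tri X) : Tri X :=
  mkT (ginvol X (t1 r)) (ginvol X (t2 r)) (fhom (ginvol X) (ta r)).

Lemma Tsig_invol (X : GpdInv) (r : Tri X) : Tsig (Tsig r) = r.
Proof. destruct r as [x y a]. unfold Tsig; simpl. apply Tri_eq, heq_invol. Qed.

Definition OP (X : GpdInv) : Type := (X + Tri X * bool)%type.

Definition Piota (X : GpdInv) (o : OP X) : OP X :=
  match o with
  | inl x => inl (ginvol X x)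
  | inr (r, b) => inr (Tsig r, negb b)
  end.

Definition Psrc (X : GpdInv) (o : OP X) : X :=
  match o with inl x => x | inr (r, _) => t1 r end.
Definition Ptgt (X : GpdInv) (o : OP X) : X :=
  match o with inl x => x | inr (r, _) => t2 r end.
Definition Parr (X : GpdInv) (o : OP X) : hom X (Psrc o) (Ptgt o) :=
  match o return hom X (Psrc o) (Ptgt o) with
  | inl x => gid x
  | inr (r, _) => ta r
  end.

Lemma Piota_invol (X : GpdInv) (o : OP X) : Piota (Piota o) = o.
Proof.
  destruct o as [x | [r b]]; simpl; f_equal.
  - apply ob_invol.
  - rewrite Tsig_invol, Bool.negb_involutive; reflexivity.
Qed.

Lemma Psrc_comm (X : GpdInv) (o : OP X) : Psrc (Piota o) = ginvol X (Psrc o).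
Proof. destruct o as [x | [r b]]; reflexivity. Qed.

Lemma Ptgt_comm (X : GpdInv) (o : OP X) : Ptgt (Piota o) = ginvol X (Ptgt o).
Proof. destruct o as [x | [r b]]; reflexivity. Qed.

Lemma Parr_comm (X : GpdInv) (o : OP X) : heq (Parr (Piota o)) (fhom (ginvol X) (Parr o)).
Proof.
  destruct o as [x | [r b]]; simpl.
  - rewrite fhom_id. apply heq_refl.
  - apply heq_refl.
Qed.

Definition PX (X : GpdInv) : GpdInv :=
  PullInv (@Piota_invol X) (@Psrc_comm X).

Definition sXF (X : GpdInv) : Functor X (PX X).
Proof.
  refine (@Build_Functor X (PX X) (fun x => inl x) (fun x y f => f) _ _); reflexivity.
Defined.

Definition sX (X : GpdInv) : GMor X (PX X).
Proof.
  refine (@Build_GMor X (PX X) (sXF X) _).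
  apply Functor_eq_heq; [reflexivity|]. intros x y f.
  apply heq_pull; try reflexivity. simpl. apply heq_sym, heq_htrans.
Defined.

Definition pconj (X : GpdInv) (o o' : OP X) (b : hom X (Psrc o) (Psrc o')) :
  hom X (Ptgt o) (Ptgt o') := gcomp (Parr o') (gcomp b (ginv (Parr o))).

Lemma ginv_id (C : Gpd) (x : C) : ginv (gid x) = gid x.
Proof. rewrite <- (gcomp_idr (ginv (gid x))). apply ginv_l. Qed.

Lemma pconj_id (X : GpdInv) (o : OP X) : @pconj X o o (gid _) = gid _.
Proof. unfold pconj. rewrite gcomp_idl, ginv_r. reflexivity. Qed.

Lemma pconj_comp (X : GpdInv) (o o' o'' : OP X) (g : hom X (Psrc o') (Psrc o''))
  (f : hom X (Psrc o) (Psrc o')) :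
  @pconj X o o'' (gcomp g f) = gcomp (@pconj X o' o'' g) (@pconj X o o' f).
Proof.
  unfold pconj. rewrite !gcomp_assoc. f_equal. f_equal.
  rewrite <- (gcomp_assoc _ (ginv (Parr o'))), ginv_l, gcomp_idr. reflexivity.
Qed.

Definition pXF (X : GpdInv) : Functor (PX X) (prod_inv X X).
Proof.
  refine (@Build_Functor (PX X) (prod_inv X X) (fun o => mkgpair (Psrc o) (Ptgt o))
    (fun o o' f => mkgpair f (@pconj X o o' f)) _ _).
  - intros o; simpl. rewrite pconj_id. reflexivity.
  - intros o o' o'' g f; simpl. rewrite pconj_comp. reflexivity.
Defined.

Lemma heq_pair (C D : Gpd) (x1 y1 x1' y1' : C) (x2 y2 x2' y2' : D)
  (a : hom C x1 y1) (a' : hom C x1' y1') (b : hom D x2 y2) (b' : hom D x2' y2') :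
  heq a a' -> heq b b' ->
  @heq (prod_gpd C D) (mkgpair x1 x2) (mkgpair y1 y2) (mkgpair x1' x2') (mkgpair y1' y2')
    (mkgpair a b) (mkgpair a' b').
Proof.
  intros (e1 & e2 & H1) (e3 & e4 & H2). destruct e1, e2, e3, e4. simpl in *. subst.
  apply heq_refl.
Qed.

Definition pX (X : GpdInv) : GMor (PX X) (prod_inv X X).
Proof.
  refine (@Build_GMor (PX X) (prod_inv X X) (pXF X) _).
  apply Functor_eq_heq.
  - intro o; destruct o as [x | [r b]]; reflexivity.
  - intros o o' f. simpl.
    change (@heq (prod_gpd X X)
      (mkgpair (Psrc (Piota o)) (Ptgt (Piota o)))
      (mkgpair (Psrc (Piota o')) (Ptgt (Piota o')))
      (mkgpair (ginvol X (Psrc o)) (ginvol X (Ptgt o)))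
      (mkgpair (ginvol X (Psrc o')) (ginvol X (Ptgt o')))
      (mkgpair (htrans (eq_sym (Psrc_comm o)) (eq_sym (Psrc_comm o')) (fhom (ginvol X) f))
         (@pconj X (Piota o) (Piota o')
           (htrans (eq_sym (Psrc_comm o)) (eq_sym (Psrc_comm o')) (fhom (ginvol X) f))))
      (mkgpair (fhom (ginvol X) f) (fhom (ginvol X) (@pconj X o o' f)))).
    apply heq_pair.
    + apply heq_htrans.
    + unfold pconj. rewrite !fhom_comp, fhom_inv.
      apply heq_comp; [apply Parr_comm|]. apply heq_comp; [apply heq_htrans|].
      apply heq_inv, Parr_comm.
Defined.
Lemma pX_fib (X : GpdInv) : fib (pX X).
Proof.
  intros o b phi.
  exists (inr (mkT (gfst b) (gsnd b) (gcomp (gsnd phi) (gcomp (Parr o) (ginv (gfst phi)))), false)).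
  exists eq_refl. exists (gfst phi). simpl.
  change phi with (mkgpair (gfst phi) (gsnd phi)). unfold pconj. simpl. f_equal.
  rewrite !gcomp_assoc. rewrite <- (gcomp_assoc _ (ginv (gfst phi))), ginv_l, gcomp_idr.
  rewrite <- gcomp_assoc, ginv_r, gcomp_idr. reflexivity.
Qed.

Lemma sX_weq (X : GpdInv) : weq (sX X).
Proof.
  exists (Ppi (@Psrc X)). split.
  - exists (fun x => gid x). intros x y f; simpl. rewrite gcomp_idl, gcomp_idr; reflexivity.
  - exists (fun o => gid (Psrc o)). intros x y f; simpl.
    rewrite gcomp_idl, gcomp_idr; reflexivity.
Qed.

Lemma pX_sX (X : GpdInv) : Gcomp (pX X) (sX X) = Gdiag X.
Proof.
  apply GMor_eq. apply Functor_eq_heq; [reflexivity|]. intros x y f. simpl.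
  unfold pconj; simpl. rewrite ginv_id, gcomp_idr, gcomp_idl. apply heq_refl.
Qed.

Definition liftE (E Z : Gpd) (q : Functor E Z) (Hq : isofibration q /\ gpd_equiv q)
  (z : Z) : E :=
  proj1_sig (constructive_indefinite_description _
    (tfib_surj (proj1 Hq) (proj2 Hq) z)).

Lemma liftE_spec (E Z : Gpd) (q : Functor E Z) (Hq : isofibration q /\ gpd_equiv q)
  (z : Z) : q (liftE Hq z) = z.
Proof. unfold liftE. destruct constructive_indefinite_description; assumption. Qed.

Definition cof_k (X E Z : GpdInv) (q : GMor E Z) (Hq : tfib q) (u : GMor X E)
  (v : GMor (PX X) Z) (o : OP X) : E :=
  match o with
  | inl x => u x
  | inr (r, false) => liftE Hq (v (inr (r, false)))
  | inr (r, true) => ginvol E (liftE Hq (v (inr (Tsig r, false))))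
  end.

Lemma cof_k_spec (X E Z : GpdInv) (q : GMor E Z) (Hq : tfib q) (u : GMor X E)
  (v : GMor (PX X) Z) (Huv : Gcomp q u = Gcomp v (sX X)) (o : PX X) :
  q (cof_k Hq u v o) = v o.
Proof.
  destruct o as [x | [r [|]]]; simpl.
  - exact (ob_of_Feq x (f_equal (@mfun _ _) Huv)).
  - rewrite ob_comm, liftE_spec.
    transitivity (v (ginvol (PX X) (inr (Tsig r, false)))).
    + symmetry; apply ob_comm.
    + simpl. rewrite Tsig_invol. reflexivity.
  - apply liftE_spec.
Qed.

Lemma cof_k_comm (X E Z : GpdInv) (q : GMor E Z) (Hq : tfib q) (u : GMor X E)
  (v : GMor (PX X) Z) (o : PX X) :
  cof_k Hq u v (ginvol (PX X) o) = ginvol E (cof_k Hq u v o).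
Proof.
  destruct o as [x | [r [|]]]; simpl.
  - apply ob_comm.
  - rewrite ob_invol. reflexivity.
  - rewrite Tsig_invol. reflexivity.
Qed.

Lemma sX_cof (X : GpdInv) : cof (sX X).
Proof.
  intros E Z q Hq u v Huv.
  pose proof (proj2 Hq) as HF.
  set (l0 := @LiftV (PX X) E Z (mfun q) (fun a b chi => @fpre _ _ _ HF a b chi)
               (fun a b chi => @fpre_spec _ _ _ HF a b chi) (equiv_faithful HF)
               (cof_k Hq u v) (mfun v) (@cof_k_spec X E Z q Hq u v Huv)).
  assert (Hl : Fcomp l0 (ginvol (PX X)) = Fcomp (ginvol E) l0).
  { apply (faithful_unique (equiv_faithful HF)).
    - intro o. apply cof_k_comm.
    - rewrite !Fcomp_assoc. unfold l0. rewrite LiftV_q, (mfun_comm q), <- Fcomp_assoc.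
      rewrite LiftV_q. apply (mfun_comm v). }
  exists (@Build_GMor (PX X) E l0 Hl). split.
  - apply GMor_eq. simpl. apply (faithful_unique (equiv_faithful HF)).
    + intro x; reflexivity.
    + rewrite Fcomp_assoc. unfold l0. rewrite LiftV_q.
      exact (eq_sym (f_equal (@mfun _ _) Huv)).
  - apply GMor_eq. simpl. apply LiftV_q.
Qed.

Lemma PX_path (X : GpdInv) : path_object (sX X) (pX X).
Proof.
  split; [split; [apply sX_cof | apply sX_weq]|]. split; [apply pX_fib | apply pX_sX].
Qed.
Definition orb_rep (Y : GpdInv) (y : Y) : Y :=
  epsilon (inhabits y) (fun z => z = y \/ z = ginvol Y y).

Lemma orb_rep_spec (Y : GpdInv) (y : Y) : orb_rep y = y \/ orb_rep y = ginvol Y y.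
Proof. unfold orb_rep. apply epsilon_spec. exists y; left; reflexivity. Qed.

Lemma orb_rep_comm (Y : GpdInv) (y : Y) : orb_rep (ginvol Y y) = orb_rep y.
Proof.
  unfold orb_rep.
  assert (E : (fun z => z = ginvol Y y \/ z = ginvol Y (ginvol Y y)) =
              (fun z => z = y \/ z = ginvol Y y)).
  { apply functional_extensionality; intro z. apply propositional_extensionality.
    rewrite ob_invol. tauto. }
  rewrite E. f_equal. apply proof_irrelevance.
Qed.

Definition tb (Y : GpdInv) (y : Y) : bool :=
  if excluded_middle_informative (orb_rep y = y) then true else false.

Lemma tb_flip (Y : GpdInv) (y : Y) : ginvol Y y <> y -> tb (ginvol Y y) = negb (tb y).
Proof.
  intros Hn. unfold tb. rewrite orb_rep_comm.
  destruct (orb_rep_spec y) as [E | E]; rewrite E.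
  - destruct (excluded_middle_informative (y = ginvol Y y)) as [h|h];
      [exfalso; apply Hn; symmetry; exact h|].
    destruct (excluded_middle_informative (y = y)) as [_|h2]; [reflexivity|].
    exfalso; apply h2; reflexivity.
  - destruct (excluded_middle_informative (ginvol Y y = y)) as [h|h];
      [exfalso; apply Hn; exact h|].
    destruct (excluded_middle_informative (ginvol Y y = ginvol Y y)) as [_|h'];
      [reflexivity|]. exfalso; apply h'; reflexivity.
Qed.

Definition hk (Y : GpdInv) (M : GMor Y Y) (eps : forall y, hom Y (M y) y) (y : Y) : OP Y :=
  if excluded_middle_informative (ginvol Y y = y) then inl y
  else inr (mkT (M y) y (eps y), tb y).

Lemma hk_src (Y : GpdInv) (M : GMor Y Y) (eps : forall y, hom Y (M y) y)
  (Hfx : forall y, ginvol Y y = y -> heq (eps y) (gid y)) (y : Y) :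
  Psrc (hk eps y) = M y.
Proof.
  unfold hk. destruct excluded_middle_informative as [h|h]; simpl; [|reflexivity].
  exact (eq_sym (heq_src (Hfx y h))).
Qed.

Lemma hk_tgt (Y : GpdInv) (M : GMor Y Y) (eps : forall y, hom Y (M y) y) (y : Y) :
  Ptgt (hk eps y) = y.
Proof. unfold hk. destruct excluded_middle_informative; reflexivity. Qed.

Lemma hk_arr (Y : GpdInv) (M : GMor Y Y) (eps : forall y, hom Y (M y) y)
  (Hfx : forall y, ginvol Y y = y -> heq (eps y) (gid y)) (y : Y) :
  heq (Parr (hk eps y)) (eps y).
Proof.
  unfold hk. destruct excluded_middle_informative as [h|h]; simpl; [|apply heq_refl].
  apply heq_sym, Hfx, h.
Qed.

Lemma hk_comm (Y : GpdInv) (M : GMor Y Y) (eps : forall y, hom Y (M y) y)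
  (Heq : forall y, heq (eps (ginvol Y y)) (fhom (ginvol Y) (eps y))) (y : Y) :
  hk eps (ginvol Y y) = Piota (hk eps y).
Proof.
  destruct (excluded_middle_informative (ginvol Y y = y)) as [h|h].
  - rewrite h. unfold hk. destruct excluded_middle_informative as [_|h']; [|contradiction].
    simpl. rewrite h. reflexivity.
  - assert (h2 : ginvol Y (ginvol Y y) <> ginvol Y y).
    { rewrite ob_invol. intro E; apply h; symmetry; exact E. }
    unfold hk. destruct (excluded_middle_informative (ginvol Y y = y)) as [h'|_];
      [contradiction|].
    destruct excluded_middle_informative as [h'|_]; [contradiction|]. simpl.
    f_equal. f_equal.
    + apply Tri_eq. apply Heq.
    + apply tb_flip, h.
Qed.

Lemma homotopy_builder (Y : GpdInv) (M : GMor Y Y) (eps : forall y, hom Y (M y) y)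
  (Hn : forall y y' (phi : hom Y y y'), gcomp (eps y') (fhom M phi) = gcomp phi (eps y))
  (Heq : forall y, heq (eps (ginvol Y y)) (fhom (ginvol Y) (eps y)))
  (Hfx : forall y, ginvol Y y = y -> heq (eps y) (gid y)) :
  right_homotopic M (Gid Y).
Proof.
  set (H0 := @LiftV Y (PX Y) Y (Ppi (@Psrc Y)) (fun a b chi => chi)
               (fun a b chi => eq_refl) (@Ppi_faithful Y _ (@Psrc Y))
               (hk eps) (mfun M) (hk_src Hfx)).
  assert (HH : Fcomp H0 (ginvol Y) = Fcomp (ginvol (PX Y)) H0).
  { apply (faithful_unique (@Ppi_faithful Y _ (@Psrc Y))).
    - intro y. apply (hk_comm Heq).
    - rewrite !Fcomp_assoc. unfold H0. rewrite LiftV_q, (mfun_comm M).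
      change (ginvol (PX Y)) with (PullInvF (@Psrc_comm Y)).
      symmetry. etransitivity; [apply (f_equal (fun K => Fcomp K H0)); apply Ppi_comm|].
      rewrite <- Fcomp_assoc. f_equal. apply LiftV_q. }
  exists (PX Y), (sX Y), (pX Y). split; [apply PX_path|].
  exists (@Build_GMor Y (PX Y) H0 HH).
  apply GMor_eq. apply Functor_eq_heq.
  - intro y. simpl. rewrite (hk_src Hfx), hk_tgt. reflexivity.
  - intros y y' phi. simpl. apply heq_pair.
    + apply heq_htrans.
    + unfold pconj. eapply heq_trans.
      * apply heq_comp; [apply (hk_arr Hfx)|]. apply heq_comp; [apply heq_htrans|].
        apply heq_inv, (hk_arr Hfx).
      * rewrite gcomp_assoc, Hn, <- gcomp_assoc, ginv_r, gcomp_idr. apply heq_refl.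
Qed.
(* constructing an equivariant homotopy inverse *)
Record Setup (X Y : GpdInv) : Type := {
  sf : GMor X Y;
  sHF : weq sf;
  sG0 : Y -> X;
  seps : forall y, hom Y (sf (sG0 y)) y;
  sfi : fixpt Y -> fixpt X;
  sfi2 : forall b, fixmap sf (sfi b) = b;
  sfi1 : forall a, sfi (fixmap sf a) = a }.

Definition pick (X Y : GpdInv) (S : Setup X Y) (y : Y) : {x : X & hom Y (sf S x) y} :=
  match excluded_middle_informative (ginvol Y y = y) with
  | left p => existT _ (proj1_sig (sfi S (exist _ y p)))
      (htrans (eq_sym (f_equal (@proj1_sig _ _) (sfi2 S (exist _ y p)))) eq_refl (gid y))
  | right _ =>
      if excluded_middle_informative (orb_rep y = y)
      then existT _ (sG0 S y) (seps S y)
      else existT _ (ginvol X (sG0 S (ginvol Y y)))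
        (htrans (eq_sym (ob_comm (sf S) _)) (ob_invol y)
           (fhom (ginvol Y) (seps S (ginvol Y y))))
  end.

Definition gob (X Y : GpdInv) (S : Setup X Y) (y : Y) : X := projT1 (pick S y).
Definition gep (X Y : GpdInv) (S : Setup X Y) (y : Y) : hom Y (sf S (gob S y)) y :=
  projT2 (pick S y).

Lemma pick_fix (X Y : GpdInv) (S : Setup X Y) (y : Y) : ginvol Y y = y ->
  heq (gep S y) (gid y) /\ ginvol X (gob S y) = gob S y.
Proof.
  intros h. unfold gep, gob, pick.
  destruct excluded_middle_informative as [p|n]; [|contradiction]. simpl.
  split; [apply heq_htrans | exact (proj2_sig (sfi S _))].
Qed.

Lemma pick_rep (X Y : GpdInv) (S : Setup X Y) (y : Y) : ginvol Y y <> y ->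
  orb_rep y = y -> pick S y = existT _ (sG0 S y) (seps S y).
Proof.
  intros h r. unfold pick.
  destruct (excluded_middle_informative (ginvol Y y = y)) as [p|_]; [contradiction|].
  destruct excluded_middle_informative; [reflexivity|contradiction].
Qed.

Lemma pick_nrep (X Y : GpdInv) (S : Setup X Y) (y : Y) : ginvol Y y <> y ->
  orb_rep y <> y -> pick S y = existT _ (ginvol X (sG0 S (ginvol Y y)))
        (htrans (eq_sym (ob_comm (sf S) _)) (ob_invol y)
           (fhom (ginvol Y) (seps S (ginvol Y y)))).
Proof.
  intros h r. unfold pick.
  destruct (excluded_middle_informative (ginvol Y y = y)) as [p|_]; [contradiction|].
  destruct excluded_middle_informative; [contradiction|reflexivity].
Qed.

Lemma seps_heq (X Y : GpdInv) (S : Setup X Y) (a b : Y) : a = b -> heq (seps S a) (seps S b).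
Proof. intros ->; apply heq_refl. Qed.

Lemma gep_heq (X Y : GpdInv) (S : Setup X Y) (a b : Y) : a = b -> heq (gep S a) (gep S b).
Proof. intros ->; apply heq_refl. Qed.

Lemma pick_comm (X Y : GpdInv) (S : Setup X Y) (y : Y) :
  gob S (ginvol Y y) = ginvol X (gob S y) /\
  heq (gep S (ginvol Y y)) (fhom (ginvol Y) (gep S y)).
Proof.
  destruct (excluded_middle_informative (ginvol Y y = y)) as [h|h].
  - destruct (pick_fix S h) as [H1 H2]. split.
    + rewrite h. symmetry; exact H2.
    + eapply heq_trans; [apply gep_heq, h|]. eapply heq_trans; [exact H1|].
      eapply heq_trans; [|apply heq_sym, heq_fhom, H1]. rewrite fhom_id.
      apply heq_id. symmetry; exact h.
  - assert (h2 : ginvol Y (ginvol Y y) <> ginvol Y y).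
    { rewrite ob_invol. intro E; apply h; symmetry; exact E. }
    destruct (excluded_middle_informative (orb_rep y = y)) as [r|r].
    + assert (r2 : orb_rep (ginvol Y y) <> ginvol Y y).
      { rewrite orb_rep_comm, r. intro E; apply h; symmetry; exact E. }
      unfold gob, gep. rewrite (pick_nrep S h2 r2), (pick_rep S h r). simpl. split.
      * rewrite ob_invol. reflexivity.
      * eapply heq_trans; [apply heq_htrans|]. apply heq_fhom, seps_heq, ob_invol.
    + assert (r1 : orb_rep y = ginvol Y y).
      { destruct (orb_rep_spec y); [contradiction | assumption]. }
      assert (r2 : orb_rep (ginvol Y y) = ginvol Y y) by (rewrite orb_rep_comm; exact r1).
      unfold gob, gep. rewrite (pick_rep S h2 r2), (pick_nrep S h r). simpl. split.
      * rewrite ob_invol. reflexivity.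
      * apply heq_sym. eapply heq_trans; [apply heq_fhom, heq_htrans|]. apply heq_invol.
Qed.

Definition ghm (X Y : GpdInv) (S : Setup X Y) (y y' : Y) (phi : hom Y y y') :
  hom Y (sf S (gob S y)) (sf S (gob S y')) :=
  gcomp (ginv (gep S y')) (gcomp phi (gep S y)).

Lemma ghm_id (X Y : GpdInv) (S : Setup X Y) (y : Y) : ghm S (gid y) = gid _.
Proof. unfold ghm. rewrite gcomp_idl, ginv_l. reflexivity. Qed.

Lemma ghm_comp (X Y : GpdInv) (S : Setup X Y) (y y' y'' : Y) (g : hom Y y' y'')
  (f : hom Y y y') : ghm S (gcomp g f) = gcomp (ghm S g) (ghm S f).
Proof.
  unfold ghm. rewrite !gcomp_assoc. f_equal. f_equal.
  rewrite <- (gcomp_assoc _ (gep S y')), ginv_r, gcomp_idr. reflexivity.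
Qed.

Definition gF (X Y : GpdInv) (S : Setup X Y) : Functor Y X :=
  @LiftF Y X Y (mfun (sf S)) (fun a b chi => @fpre _ _ _ (sHF S) a b chi)
    (fun a b chi => @fpre_spec _ _ _ (sHF S) a b chi) (equiv_faithful (sHF S))
    (gob S) (@ghm X Y S) (@ghm_id X Y S) (@ghm_comp X Y S).

Lemma gF_q (X Y : GpdInv) (S : Setup X Y) (y y' : Y) (phi : hom Y y y') :
  fhom (sf S) (fhom (gF S) phi) = ghm S phi.
Proof. apply fpre_spec. Qed.

Lemma gF_comm (X Y : GpdInv) (S : Setup X Y) :
  Fcomp (gF S) (ginvol Y) = Fcomp (ginvol X) (gF S).
Proof.
  apply (faithful_unique (equiv_faithful (sHF S))).
  - intro y. apply (pick_comm S y).
  - apply Functor_eq_heq.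
    + intro y. simpl. f_equal. apply (pick_comm S y).
    + intros y y' phi. simpl.
      eapply heq_trans; [|apply heq_sym, heq_comm].
      rewrite !fpre_spec. unfold ghm. rewrite fhom_comp, fhom_comp, fhom_inv.
      apply heq_comp; [apply heq_inv, (pick_comm S y')|].
      apply heq_comp; [apply heq_refl|apply (pick_comm S y)].
Qed.

Definition gG (X Y : GpdInv) (S : Setup X Y) : GMor Y X :=
  @Build_GMor Y X (gF S) (gF_comm S).

Definition geta (X Y : GpdInv) (S : Setup X Y) (x : X) : hom X (gob S (sf S x)) x :=
  @fpre _ _ _ (sHF S) _ _ (gep S (sf S x)).

Lemma gob_fix (X Y : GpdInv) (S : Setup X Y) (x : X) : ginvol X x = x ->
  gob S (sf S x) = x.
Proof.
  intros hx. unfold gob, pick.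
  destruct excluded_middle_informative as [p|n].
  - simpl. assert (E : exist _ (sf S x) p = fixmap (sf S) (exist _ x hx)).
    { apply fix_eq. reflexivity. }
    rewrite E, sfi1. reflexivity.
  - exfalso; apply n. rewrite <- ob_comm, hx. reflexivity.
Qed.

Lemma rhe_of (X Y : GpdInv) (S : Setup X Y) : right_homotopy_equivalence (sf S).
Proof.
  exists (gG S). split.
  - apply (@homotopy_builder Y (Gcomp (sf S) (gG S)) (gep S)).
    + intros y y' phi. simpl. rewrite fpre_spec. unfold ghm.
      rewrite gcomp_assoc, ginv_r, gcomp_idl. reflexivity.
    + intro y. apply (pick_comm S y).
    + intros y h. apply (pick_fix S h).
  - apply (@homotopy_builder X (Gcomp (gG S) (sf S)) (geta S)).
    + intros x x' psi. apply (equiv_faithful (sHF S)). simpl.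
      rewrite !fhom_comp. unfold geta. rewrite !fpre_spec. unfold ghm.
      rewrite gcomp_assoc, ginv_r, gcomp_idl. reflexivity.
    + intro x. apply (heq_faithful (equiv_faithful (sHF S))).
      * simpl. rewrite ob_comm. apply (pick_comm S).
      * reflexivity.
      * unfold geta. rewrite fpre_spec.
        eapply heq_trans; [|apply heq_sym, heq_comm]. rewrite fpre_spec.
        eapply heq_trans; [apply gep_heq, ob_comm|]. apply (pick_comm S).
    + intros x hx. apply (heq_faithful (equiv_faithful (sHF S))).
      * apply gob_fix, hx.
      * reflexivity.
      * unfold geta. rewrite fpre_spec, fhom_id. apply (pick_fix S).
        rewrite <- ob_comm, hx. reflexivity.
Qed.
Lemma rhe_iff_bij (G H : GpdInv) (f : GMor G H) :
  right_homotopy_equivalence f <-> weq f /\ bijection (fixmap f).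
Proof.
  split.
  - intros R. split; [apply rhe_weq, R | apply rhe_bij, R].
  - intros [HF (gi & H1 & H2)].
    destruct (equiv_data HF) as [G0 eps0].
    exact (rhe_of (@Build_Setup G H f HF (fob G0) eps0 gi H2 H1)).
Qed.

Theorem theorem4p35 (G H : GpdInv) (f : GMor G H) :
  (right_homotopy_equivalence f <-> weq f /\ gpd_iso (Ffull f)) /\
  (right_homotopy_equivalence f <-> weq f /\ gpd_iso (Ffixed f)) /\
  (right_homotopy_equivalence f <-> weq f /\ bijection (fixmap f)).
Proof.
  split; [|split]; rewrite rhe_iff_bij.
  - split; intros [HF B]; split; try exact HF; apply (full_iff HF); exact B.
  - split; intros [HF B]; split; try exact HF; apply (fixed_iff HF); exact B.
  - tauto.
Qed.
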